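(* Let $V$ be a Poisson algebra over $\Bbbk$ with product $ab$ and bracket $[a,b]$, let $D$ be a derivation of $V$ (of both the product and the bracket), and let $V[t,t^{-1}]$ be the commutative algebra of Laurent polynomials over $V$. Then the bilinear map defined by $$[at^n,bt^m]=[a,b]t^{n+m}+\big(naD(b)-mbD(a)\big)t^{n+m-1},\qquad a,b\in V,\ n,m\in\mathbb Z,$$ is a Poisson bracket on $V[t,t^{-1}]$ (together with the usual commutative multiplication of Laurent polynomials).
   Context: $\Bbbk$ is a field of characteristic $0$. A Poisson algebra is a commutative associative algebra with a Lie bracket satisfying $[a,bc]=[a,b]c+b[a,c]$. *)

(* Defs.v *)
From HB Require Import structures.
From mathcomp Require Import all_boot all_order all_algebra.
Set Implicit Arguments. Unset Strict Implicit. Unset Printing Implicit Defensive.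
Import Order.TTheory GRing.Theory Num.Theory.
Local Open Scope ring_scope.

Section Poisson.
Variables (k : fieldType) (V : lmodType k).

Definition bilinear_op (f : V -> V -> V) : Prop :=
  (forall (c : k) (x y z : V), f (c *: x + y) z = c *: f x z + f y z) /\
  (forall (c : k) (x y z : V), f z (c *: x + y) = c *: f z x + f z y).

Definition is_poisson (mul br : V -> V -> V) : Prop :=
  bilinear_op mul /\
  (forall a b c, mul a (mul b c) = mul (mul a b) c) /\
  (forall a b, mul a b = mul b a) /\
  bilinear_op br /\
  (forall a, br a a = 0) /\
  (forall a b c, br a (br b c) + br b (br c a) + br c (br a b) = 0) /\
  (forall a b c, br a (mul b c) = mul (br a b) c + mul b (br a c)).

Definition is_poisson_derivation (mul br : V -> V -> V) (D : V -> V) : Prop :=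
  [/\ (forall (c : k) x y, D (c *: x + y) = c *: D x + D y),
      (forall a b, D (mul a b) = mul (D a) b + mul a (D b))
    & (forall a b, D (br a b) = br (D a) b + br a (D b))].

(* Laurent polynomials V[t,t^-1]: an element is represented by a finite formal
   sum of monomials a t^n, given as a list of pairs (a, n); two representatives
   denote the same Laurent polynomial iff all their coefficients agree. *)
Definition laurent := seq (V * int).

Definition lcoef (p : laurent) (n : int) : V := \sum_(x <- p | x.2 == n) x.1.

Definition leq_laurent (p q : laurent) : Prop := forall n, lcoef p n = lcoef q n.

Definition ladd (p q : laurent) : laurent := p ++ q.
Definition lscale (c : k) (p : laurent) : laurent := [seq (c *: x.1, x.2) | x <- p].
Definition lzero : laurent := [::].

Definition lmul (mul : V -> V -> V) (p q : laurent) : laurent :=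
  [seq (mul x.1 y.1, x.2 + y.2) | x <- p, y <- q].

Definition lbr_mono (mul br : V -> V -> V) (D : V -> V) (x y : V * int) : laurent :=
  [:: (br x.1 y.1, x.2 + y.2);
      ((mul x.1 (D y.1)) *~ x.2 - (mul y.1 (D x.1)) *~ y.2, x.2 + y.2 - 1)].

Definition lbr (mul br : V -> V -> V) (D : V -> V) (p q : laurent) : laurent :=
  flatten [seq lbr_mono mul br D x y | x <- p, y <- q].

End Poisson.

(* Main.v *)
Require Import Defs.
From HB Require Import structures.
From mathcomp Require Import all_boot all_order all_algebra.
Import Order.TTheory GRing.Theory Num.Theory.
Local Open Scope ring_scope.
From mathcomp Require Import ring zify.
Set Implicit Arguments. Unset Strict Implicit. Unset Printing Implicit Defensive.

Section Phi.
Variable W : zmodType.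
Definition phi (xs : seq W) (f : nat -> int) : W := \sum_(k < size xs) xs`_k *~ f k.
Lemma phiD xs f g : phi xs f + phi xs g = phi xs (fun n => f n + g n).
Proof. by rewrite /phi -big_split; apply: eq_bigr => i _; rewrite mulrzDr. Qed.
Lemma phiN xs f : - phi xs f = phi xs (fun n => - f n).
Proof. by rewrite /phi -sumrN; apply: eq_bigr => i _; rewrite mulrNz. Qed.
Lemma phiMz xs f c : phi xs f *~ c = phi xs (fun n => f n * c).
Proof. by rewrite /phi mulrz_suml; apply: eq_bigr => i _; rewrite mulrzA. Qed.
Lemma phiE xs k c : (k < size xs)%N -> xs`_k *~ c = phi xs (fun n => if n == k then c else 0).
Proof.
move=> hk; rewrite /phi (bigD1 (Ordinal hk)) //= eqxx big1 ?addr0 // => i.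
by rewrite -val_eqE /= => /negbTE ->.
Qed.
Lemma phi0 xs f : (forall n, (n < size xs)%N -> f n = 0) -> phi xs f = 0.
Proof. by move=> h; rewrite /phi big1 // => i _; rewrite h. Qed.
End Phi.

Ltac phi_atoms xs l k :=
  lazymatch l with
  | ?t :: ?l' =>
      let E := fresh "E" in
      assert (E : forall c, t *~ c = phi xs (fun n => if n == k then c else 0))
        by exact: (fun c => @phiE _ xs k c isT);
      rewrite ?E; clear E; phi_atoms xs l' (S k)
  | _ => idtac
  end.

Ltac phi_bare xs l k :=
  lazymatch l with
  | ?t :: ?l' =>
      let E := fresh "E" in
      assert (E : t = phi xs (fun n => if n == k then 1 else 0))
        by (rewrite -(@phiE _ xs k 1 isT) mulr1z; reflexivity);
      rewrite ?E; clear E; phi_bare xs l' (S k)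
  | _ => idtac
  end.

Ltac casen m l :=
  lazymatch l with
  | _ :: ?l' => destruct m as [|m]; [intros _; simpl; ring | casen m l']
  | _ => by []
  end.

Ltac phi_solve l :=
  let xs := fresh "xs" in
  set xs := l;
  rewrite ?mulrzDl ?mulrzBl ?mulNrz;
  phi_atoms xs l 0%N;
  rewrite ?(phiN, phiMz, phiD);
  rewrite ?(phiN, phiMz, phiD);
  rewrite ?(phiN, phiMz, phiD);
  apply: phi0; let m := fresh "m" in intro m; rewrite /xs /=;
  casen m l.

Section Bil.
Variables (k : fieldType) (V : lmodType k) (f : V -> V -> V).
Hypothesis hf : bilinear_op f.
Lemma fDl x y z : f (x + y) z = f x z + f y z.
Proof. by have := hf.1 1 x y z; rewrite !scale1r. Qed.
Lemma fDr x y z : f z (x + y) = f z x + f z y.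
Proof. by have := hf.2 1 x y z; rewrite !scale1r. Qed.
Lemma f0l z : f 0 z = 0.
Proof. by apply: (addrI (f 0 z)); rewrite -fDl !addr0. Qed.
Lemma f0r z : f z 0 = 0.
Proof. by apply: (addrI (f z 0)); rewrite -fDr !addr0. Qed.
Lemma fZl c x z : f (c *: x) z = c *: f x z.
Proof. by have := hf.1 c x 0 z; rewrite !addr0 f0l addr0. Qed.
Lemma fZr c x z : f z (c *: x) = c *: f z x.
Proof. by have := hf.2 c x 0 z; rewrite !addr0 f0r addr0. Qed.
Lemma fNl x z : f (- x) z = - f x z.
Proof. by rewrite -scaleN1r fZl scaleN1r. Qed.
Lemma fNr x z : f z (- x) = - f z x.
Proof. by rewrite -scaleN1r fZr scaleN1r. Qed.
Lemma fBl x y z : f (x - y) z = f x z - f y z.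
Proof. by rewrite fDl fNl. Qed.
Lemma fBr x y z : f z (x - y) = f z x - f z y.
Proof. by rewrite fDr fNr. Qed.
Lemma fzl x z (i : int) : f (x *~ i) z = f x z *~ i.
Proof. by rewrite -!scaler_int fZl. Qed.
Lemma fzr x z (i : int) : f z (x *~ i) = f z x *~ i.
Proof. by rewrite -!scaler_int fZr. Qed.
End Bil.
Lemma condE (e n N c : int) : e = N - c -> (e == n) = (N - n == c).
Proof. by move=> ->; apply/eqP/eqP => h; rewrite -h; ring. Qed.

Ltac normc N n :=
  repeat match goal with |- context[?e == n] =>
    first [ rewrite (@condE e n N 0 ltac:(ring))
          | rewrite (@condE e n N 1 ltac:(ring))
          | rewrite (@condE e n N 2 ltac:(ring)) ] end.

Lemma eq01 : ((0:int) == 1) = false. Proof. by []. Qed.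
Lemma eq02 : ((0:int) == 2) = false. Proof. by []. Qed.
Lemma eq10 : ((1:int) == 0) = false. Proof. by []. Qed.
Lemma eq12 : ((1:int) == 2) = false. Proof. by []. Qed.
Lemma eq20 : ((2:int) == 0) = false. Proof. by []. Qed.
Lemma eq21 : ((2:int) == 1) = false. Proof. by []. Qed.

Ltac dsimp := rewrite ?eqxx ?eq01 ?eq02 ?eq10 ?eq12 ?eq20 ?eq21 ?mulr1n ?mulr0n
  ?addr0 ?add0r ?subr0 ?sub0r ?oppr0.

Ltac dcase d c := let e := fresh "e" in let h := fresh "h" in
  have [e|h] := eqVneq d c; [rewrite ?e; dsimp | clear h; dsimp].
Section Key.
Variables (k : fieldType) (V : lmodType k) (W : zmodType).
Lemma lcoef_cons (z : V * int) p i :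
  lcoef (z :: p) i = (if z.2 == i then z.1 else 0) + lcoef p i.
Proof. by rewrite /lcoef big_cons; case: ifP => _ //; rewrite add0r. Qed.

Lemma sum_lcoef (G : V -> int -> W) (p : laurent V) s :
  (forall a b i, G (a + b) i = G a i + G b i) -> uniq s ->
  {subset [seq z.2 | z <- p] <= s} ->
  \sum_(z <- p) G z.1 z.2 = \sum_(i <- s) G (lcoef p i) i.
Proof.
move=> GD us; have G0 : forall i, G 0 i = 0.
  by move=> i; apply: (addrI (G 0 i)); rewrite -GD !addr0.
elim: p => [|z p IH] sub.
  by rewrite big_nil; symmetry; apply: big1_seq => i _; rewrite /lcoef big_nil G0.
rewrite big_cons IH; last by move=> x hx; apply: sub; rewrite inE hx orbT.
have zs : z.2 \in s by apply: sub; rewrite inE eqxx.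
under [in RHS]eq_bigr do rewrite lcoef_cons GD.
rewrite big_split /=; congr (_ + _).
rewrite (bigD1_seq z.2) //= eqxx big1 ?addr0 // => i.
by rewrite eq_sym => /negbTE ->; rewrite G0.
Qed.
End Key.
Section Main.
Variables (k : fieldType) (V : lmodType k) (mul br : V -> V -> V) (D : V -> V).
Hypothesis HP : is_poisson mul br.
Hypothesis HD : is_poisson_derivation mul br D.

Let Hmul : bilinear_op mul. Proof. by case: HP. Qed.
Let Hbr : bilinear_op br. Proof. by case: HP => _ [_ [_ []]]. Qed.
Lemma mulA a b c : mul a (mul b c) = mul (mul a b) c.
Proof. by case: HP => _ []. Qed.
Lemma mulC a b : mul a b = mul b a.
Proof. by case: HP => _ [_ []]. Qed.
Lemma brxx a : br a a = 0.
Proof. by case: HP => _ [_ [_ [_ []]]]. Qed.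
Lemma jacobi a b c : br a (br b c) + br b (br c a) + br c (br a b) = 0.
Proof. by case: HP => _ [_ [_ [_ [_ []]]]]. Qed.
Lemma leib a b c : br a (mul b c) = mul (br a b) c + mul b (br a c).
Proof. by case: HP => _ [_ [_ [_ [_ []]]]]. Qed.
Lemma brC a b : br a b = - br b a.
Proof.
apply/eqP; rewrite -addr_eq0; apply/eqP.
have := brxx (a + b); rewrite (fDl Hbr) !(fDr Hbr) !brxx add0r addr0 => ->.
by [].
Qed.
Lemma DL c x y : D (c *: x + y) = c *: D x + D y. Proof. by case: HD. Qed.
Lemma Dmul a b : D (mul a b) = mul (D a) b + mul a (D b). Proof. by case: HD. Qed.
Lemma Dbr a b : D (br a b) = br (D a) b + br a (D b). Proof. by case: HD. Qed.
Lemma DD x y : D (x + y) = D x + D y. Proof. by have := DL 1 x y; rewrite !scale1r. Qed.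
Lemma D0 : D 0 = 0. Proof. by apply: (addrI (D 0)); rewrite -DD !addr0. Qed.
Lemma DZ c x : D (c *: x) = c *: D x. Proof. by have := DL c x 0; rewrite !addr0 D0 addr0. Qed.
Lemma DN x : D (- x) = - D x. Proof. by rewrite -scaleN1r DZ scaleN1r. Qed.
Lemma DB x y : D (x - y) = D x - D y. Proof. by rewrite DD DN. Qed.
Lemma Dz x (i : int) : D (x *~ i) = D x *~ i. Proof. by rewrite -!scaler_int DZ. Qed.

Definition mDl := fDl Hmul. Definition mDr := fDr Hmul. Definition mNl := fNl Hmul.
Definition mNr := fNr Hmul. Definition mBl := fBl Hmul. Definition mBr := fBr Hmul.
Definition mzl := fzl Hmul. Definition mzr := fzr Hmul.
Definition bDl := fDl Hbr. Definition bDr := fDr Hbr. Definition bNl := fNl Hbr.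
Definition bNr := fNr Hbr. Definition bBl := fBl Hbr. Definition bBr := fBr Hbr.
Definition bzl := fzl Hbr. Definition bzr := fzr Hbr.

Definition cf (n : int) (z : V * int) : V := z.1 *+ (z.2 == n).
Definition Em (x y : V * int) : V := mul x.1 (D y.1) *~ x.2 - mul y.1 (D x.1) *~ y.2.

Lemma lcoefE p n : lcoef p n = \sum_(z <- p) cf n z.
Proof. by rewrite /lcoef big_mkcond; apply: eq_bigr => z _; rewrite /cf mulrb. Qed.

Lemma sum_lbr (W : zmodType) (F : V * int -> W) p q :
  \sum_(z <- lbr mul br D p q) F z =
  \sum_(x <- p) \sum_(y <- q) (F (br x.1 y.1, x.2 + y.2) + F (Em x y, x.2 + y.2 - 1)).
Proof.
rewrite /lbr big_flatten /= big_allpairs_dep /=.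
by apply: eq_bigr => x _; apply: eq_bigr => y _; rewrite !big_cons big_nil addr0.
Qed.

Lemma sum_lmul (W : zmodType) (F : V * int -> W) p q :
  \sum_(z <- lmul mul p q) F z =
  \sum_(x <- p) \sum_(y <- q) F (mul x.1 y.1, x.2 + y.2).
Proof. by rewrite /lmul big_allpairs_dep. Qed.

Definition Hm (n : int) (x y : V * int) : V :=
  cf n (br x.1 y.1, x.2 + y.2) + cf n (Em x y, x.2 + y.2 - 1).

Lemma cfD n v v' e : cf n (v + v', e) = cf n (v, e) + cf n (v', e).
Proof. by rewrite /cf /= mulrnDl. Qed.
Lemma cfZ n c v e : cf n (c *: v, e) = c *: cf n (v, e).
Proof. by rewrite /cf /=; case: (_ == _); rewrite ?mulr1n ?mulr0n ?scaler0. Qed.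

Lemma HmDl n a a' i y : Hm n (a + a', i) y = Hm n (a, i) y + Hm n (a', i) y.
Proof.
rewrite /Hm /Em /= bDl cfD mDl DD mDr !mulrzDl opprD addrACA cfD.
by rewrite addrACA.
Qed.
Lemma HmDr n b b' j x : Hm n x (b + b', j) = Hm n x (b, j) + Hm n x (b', j).
Proof.
rewrite /Hm /Em /= bDr cfD mDl DD mDr !mulrzDl opprD addrACA cfD.
by rewrite addrACA.
Qed.
Lemma HmZl n c a i y : Hm n (c *: a, i) y = c *: Hm n (a, i) y.
Proof.
rewrite /Hm /Em /= (fZl Hbr) cfZ (fZl Hmul) DZ (fZr Hmul) !scalerMzr -scalerBr cfZ.
by rewrite scalerDr.
Qed.
Lemma HmZr n c b j x : Hm n x (c *: b, j) = c *: Hm n x (b, j).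
Proof.
rewrite /Hm /Em /= (fZr Hbr) cfZ (fZl Hmul) DZ (fZr Hmul) !scalerMzr -scalerBr cfZ.
by rewrite scalerDr.
Qed.

Lemma lcoef_lbr p q n :
  lcoef (lbr mul br D p q) n = \sum_(x <- p) \sum_(y <- q) Hm n x y.
Proof. by rewrite lcoefE sum_lbr. Qed.

Lemma lbr_coef2 p q n s t : uniq s -> uniq t ->
  {subset [seq z.2 | z <- p] <= s} -> {subset [seq z.2 | z <- q] <= t} ->
  lcoef (lbr mul br D p q) n = \sum_(i <- s) \sum_(j <- t) Hm n (lcoef p i, i) (lcoef q j, j).
Proof.
move=> us ut sp sq; rewrite lcoef_lbr.
pose G := fun a i => \sum_(y <- q) Hm n (a, i) y.
transitivity (\sum_(x <- p) G x.1 x.2).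
  by apply: eq_bigr => -[a i] _.
rewrite (sum_lcoef _ us sp); last by move=> a b i; rewrite /G -big_split; apply: eq_bigr => y _; rewrite HmDl.
apply: eq_bigr => i _ /=.
pose G' := fun b j => Hm n (lcoef p i, i) (b, j).
transitivity (\sum_(y <- q) G' y.1 y.2).
  by apply: eq_bigr => -[b j] _.
by rewrite (sum_lcoef _ ut sq) // => a b j; rewrite /G' HmDr.
Qed.

Lemma lbr_welldef p p' q q' : leq_laurent p p' -> leq_laurent q q' ->
  leq_laurent (lbr mul br D p q) (lbr mul br D p' q').
Proof.
move=> hp hq n.
set s := undup [seq z.2 | z <- p ++ p']; set t := undup [seq z.2 | z <- q ++ q'].
have us : uniq s by apply: undup_uniq.
have ut : uniq t by apply: undup_uniq.
rewrite (lbr_coef2 n us ut) ?(lbr_coef2 n us ut); first last.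
- by move=> x hx; rewrite mem_undup map_cat mem_cat hx ?orbT.
- by move=> x hx; rewrite mem_undup map_cat mem_cat hx ?orbT.
- by move=> x hx; rewrite mem_undup map_cat mem_cat hx ?orbT.
- by move=> x hx; rewrite mem_undup map_cat mem_cat hx ?orbT.
by apply: eq_bigr => i _; apply: eq_bigr => j _; rewrite hp hq.
Qed.
Lemma lcoef_add (p q : laurent V) n : lcoef (ladd p q) n = lcoef p n + lcoef q n.
Proof. by rewrite /lcoef /ladd big_cat. Qed.
Lemma lcoef_scale c (p : laurent V) n : lcoef (lscale c p) n = c *: lcoef p n.
Proof. by rewrite !lcoefE /lscale big_map scaler_sumr; apply: eq_bigr => -[v e] _; rewrite cfZ. Qed.
Lemma lcoef_zero n : lcoef (lzero V) n = 0.
Proof. by rewrite /lcoef big_nil. Qed.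

Lemma lbr_linl c (p p' q : laurent V) :
  leq_laurent (lbr mul br D (ladd (lscale c p) p') q)
              (ladd (lscale c (lbr mul br D p q)) (lbr mul br D p' q)).
Proof.
move=> n; rewrite lcoef_add lcoef_scale !lcoef_lbr /ladd big_cat /lscale big_map.
rewrite scaler_sumr; congr (_ + _); apply: eq_bigr => -[a i] _.
by rewrite scaler_sumr; apply: eq_bigr => y _; rewrite HmZl.
Qed.

Lemma lbr_linr c (p p' q : laurent V) :
  leq_laurent (lbr mul br D q (ladd (lscale c p) p'))
              (ladd (lscale c (lbr mul br D q p)) (lbr mul br D q p')).
Proof.
move=> n; rewrite lcoef_add lcoef_scale !lcoef_lbr scaler_sumr -big_split.
apply: eq_bigr => x _; rewrite /ladd big_cat /lscale big_map scaler_sumr; congr (_ + _).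
by apply: eq_bigr => -[b j] _; rewrite HmZr.
Qed.

Lemma Hm_anti n x y : Hm n x y = - Hm n y x.
Proof.
rewrite /Hm /Em /cf /= [y.2 + _]addrC (brC y.1) opprD -!mulNrn opprB opprK.
by [].
Qed.
Lemma Hm_diag n x : Hm n x x = 0.
Proof. by rewrite /Hm /Em /cf /= brxx subrr !mul0rn addr0. Qed.

Lemma sum_anti (W : zmodType) (T : Type) (F : T -> T -> W) (p : seq T) :
  (forall x y, F x y = - F y x) -> (forall x, F x x = 0) ->
  \sum_(x <- p) \sum_(y <- p) F x y = 0.
Proof.
move=> Fa Fd; elim: p => [|z p IH]; first by rewrite big_nil.
rewrite big_cons big_cons Fd add0r.
under [X in _ + X]eq_bigr do rewrite big_cons.
rewrite big_split /= IH addr0.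
have -> : \sum_(i <- p) F i z = - \sum_(i <- p) F z i.
  by rewrite -sumrN; apply: eq_bigr => i _; rewrite Fa.
by rewrite subrr.
Qed.

Lemma lbr_alt (p : laurent V) : leq_laurent (lbr mul br D p p) (lzero V).
Proof.
move=> n; rewrite lcoef_zero lcoef_lbr; apply: sum_anti.
  exact: Hm_anti.
exact: Hm_diag.
Qed.
Lemma m3C x y z : mul x (mul y z) = mul x (mul z y).
Proof. by rewrite (mulC y). Qed.
Lemma m3L x y z : mul x (mul y z) = mul y (mul x z).
Proof. by rewrite !mulA (mulC x). Qed.
Lemma P1 x y z : mul x (mul z y) = mul x (mul y z). Proof. exact: m3C. Qed.
Lemma P2 x y z : mul y (mul x z) = mul x (mul y z). Proof. exact: m3L. Qed.
Lemma P3 x y z : mul y (mul z x) = mul x (mul y z). Proof. by rewrite m3C m3L. Qed.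
Lemma P4 x y z : mul z (mul x y) = mul x (mul y z). Proof. by rewrite m3L m3C. Qed.
Lemma P5 x y z : mul z (mul y x) = mul x (mul y z). Proof. by rewrite m3L m3C m3L. Qed.

Ltac canon3 x y z := rewrite ?(P1 x y z) ?(P2 x y z) ?(P3 x y z) ?(P4 x y z) ?(P5 x y z).

Lemma leib_mono (a b c : V) (i j l n : int) :
  Hm n (a, i) (mul b c, j + l) =
  (cf n (mul (br a b) c, i + j + l) + cf n (mul (Em (a, i) (b, j)) c, i + j - 1 + l)) +
  (cf n (mul b (br a c), j + (i + l)) + cf n (mul b (Em (a, i) (c, l)), j + (i + l - 1))).
Proof.
rewrite /Hm /cf /Em /=.
apply/eqP; rewrite -subr_eq0; apply/eqP.
normc (i + j + l) n.
move: (i + j + l - n) => d.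
dcase d (0:int).
  by rewrite leib subrr.
dcase d (1:int); last by [].
rewrite Dmul.
rewrite ?(mDl, mDr, mBl, mBr, mNl, mNr, mzl, mzr).
rewrite -?mulA.
canon3 a (D b) c; canon3 a b (D c); canon3 (D a) b c.
phi_solve [:: mul a (mul (D b) c); mul a (mul b (D c)); mul (D a) (mul b c)].
Qed.

Lemma lbr_leib (p q r : laurent V) :
  leq_laurent (lbr mul br D p (lmul mul q r))
              (ladd (lmul mul (lbr mul br D p q) r) (lmul mul q (lbr mul br D p r))).
Proof.
move=> n; rewrite lcoef_add lcoef_lbr !lcoefE !sum_lmul.
under eq_bigr do rewrite sum_lmul.
rewrite (sum_lbr (fun u => \sum_(w <- r) cf n (mul u.1 w.1, u.2 + w.2))).
under [X in _ = _ + X]eq_bigr do rewrite sum_lbr.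
rewrite [X in _ = _ + X]exchange_big /= -big_split /=.
apply: eq_bigr => -[a i] _; rewrite -big_split /=.
apply: eq_bigr => -[b j] _; rewrite /= -!big_split /=.
apply: eq_bigr => -[c l] _ /=.
by rewrite leib_mono.
Qed.

Lemma mulCbr x u v : mul x (br u v) = mul (br u v) x.
Proof. exact: mulC. Qed.

Definition J n (x y w : V * int) :=
  Hm n x (br y.1 w.1, y.2 + w.2) + Hm n x (Em y w, y.2 + w.2 - 1).

Lemma jac_mono (a b c : V) (i j l n : int) :
  J n (a, i) (b, j) (c, l) + J n (b, j) (c, l) (a, i) + J n (c, l) (a, i) (b, j) = 0.
Proof.
rewrite /J /Hm /cf /Em /=.
normc (i + j + l) n.
move: (i + j + l - n) => d.
dcase d (0:int).
  exact: jacobi.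
dcase d (1:int).
  rewrite !Dbr.
  rewrite ?(mDl, mDr, mBl, mBr, mNl, mNr, mzl, mzr, bDl, bDr, bBl, bBr, bNl, bNr, bzl, bzr).
  rewrite !leib.
  rewrite ?(mDl, mDr, mBl, mBr, mNl, mNr, mzl, mzr, bDl, bDr, bBl, bBr, bNl, bNr, bzl, bzr).
  rewrite ?mulCbr.
  rewrite (brC (D b) c) (brC (D c) a) (brC (D a) b) (brC b a) (brC a c) (brC c b).
  rewrite ?(mNl, mNr).
  phi_solve [:: mul (br a b) (D c); mul (br b c) (D a); mul (br c a) (D b);
     mul (br a (D b)) c; mul (br a (D c)) b; mul (br b (D a)) c;
     mul (br b (D c)) a; mul (br c (D a)) b; mul (br c (D b)) a].
dcase d (2:int); last by [].
rewrite ?(Dz, DD, DB, DN, Dmul).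
rewrite ?(mDl, mDr, mBl, mBr, mNl, mNr, mzl, mzr).
rewrite -?mulA.
canon3 a (D b) (D c); canon3 b (D a) (D c); canon3 c (D a) (D b).
canon3 a b (D (D c)); canon3 b c (D (D a)); canon3 c a (D (D b)).
phi_solve [:: mul a (mul (D b) (D c)); mul b (mul (D a) (D c)); mul c (mul (D a) (D b));
   mul a (mul b (D (D c))); mul b (mul c (D (D a))); mul c (mul a (D (D b)))].
Qed.

Lemma lbr_jac (p q r : laurent V) :
  leq_laurent (ladd (ladd (lbr mul br D p (lbr mul br D q r))
                          (lbr mul br D q (lbr mul br D r p)))
                    (lbr mul br D r (lbr mul br D p q))) (lzero V).
Proof.
move=> n.
have E : forall p q r : laurent V, lcoef (lbr mul br D p (lbr mul br D q r)) n =
    \sum_(x <- p) \sum_(y <- q) \sum_(w <- r) J n x y w.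
  move=> p1 q1 r1; rewrite lcoef_lbr; apply: eq_bigr => x _.
  by rewrite (sum_lbr (Hm n x)).
rewrite !lcoef_add lcoef_zero !E.
have -> : \sum_(y <- q) \sum_(w <- r) \sum_(x <- p) J n y w x =
          \sum_(x <- p) \sum_(y <- q) \sum_(w <- r) J n y w x.
  by under eq_bigr do rewrite exchange_big; rewrite exchange_big.
have -> : \sum_(w <- r) \sum_(x <- p) \sum_(y <- q) J n w x y =
          \sum_(x <- p) \sum_(y <- q) \sum_(w <- r) J n w x y.
  by rewrite exchange_big; under eq_bigr do rewrite exchange_big.
rewrite -!big_split big1 // => -[a i] _.
rewrite -!big_split big1 // => -[b j] _.
rewrite -!big_split big1 // => -[c l] _.
exact: jac_mono.
Qed.
End Main.

Theorem mainTheorem4 (k : fieldType) (V : lmodType k)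
    (mul br : V -> V -> V) (D : V -> V) :
  [pchar k] =i pred0 ->
  is_poisson mul br ->
  is_poisson_derivation mul br D ->
  let LB := lbr mul br D in
  let LM := lmul mul in
  (* the bracket is well defined on V[t,t^-1] *)
      (forall p p' q q' : laurent V, leq_laurent p p' -> leq_laurent q q' ->
         leq_laurent (LB p q) (LB p' q')) /\
      (* bilinear *)
      (forall (c : k) (p p' q : laurent V),
         leq_laurent (LB (ladd (lscale c p) p') q) (ladd (lscale c (LB p q)) (LB p' q))) /\
      (forall (c : k) (p p' q : laurent V),
         leq_laurent (LB q (ladd (lscale c p) p')) (ladd (lscale c (LB q p)) (LB q p'))) /\
      (* alternating *)
      (forall p : laurent V, leq_laurent (LB p p) (lzero V)) /\
      (* Jacobi identity *)
      (forall p q r : laurent V,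
         leq_laurent (ladd (ladd (LB p (LB q r)) (LB q (LB r p))) (LB r (LB p q)))
                     (lzero V)) /\ (* Leibniz rule w.r.t. the usual product of Laurent polynomials *)
      (forall p q r : laurent V,
         leq_laurent (LB p (LM q r)) (ladd (LM (LB p q) r) (LM q (LB p r)))).
Proof.
move=> _ HP HD LB LM.
split; first by move=> p p' q q'; apply: (lbr_welldef HP HD).
split; first by move=> c p p' q; apply: (lbr_linl HP HD).
split; first by move=> c p p' q; apply: (lbr_linr HP HD).
split; first by move=> p; exact: (lbr_alt D HP).
split; first by move=> p q r; apply: (lbr_jac HP HD).
by move=> p q r; apply: (lbr_leib HP HD).
Qed.
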